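(* Let $\mathbb{H}$ be a finite-dimensional complex Hilbert space with $\dim\mathbb{H}\ge2$, let $|X\rangle\in\mathbb{H}^{\otimes3}$ be a known unit vector, let $c'_1,c'_2>0$, and let $\alpha,\beta$ be nonzero complex numbers with $|\alpha|^2+|\beta|^2=1$, $|\mu\rangle=\alpha|0\rangle+\beta|1\rangle\in\mathbb{C}^2$. Then there exists a probabilistic quantum transformation $\mathcal{F}'$ from $\mathbb{C}^2\otimes\mathbb{H}^{\otimes2}\otimes\mathbb{H}^{\otimes2}$ to $\mathbb{H}$, independent of $\alpha,\beta,\psi,\phi$, such that for all unit vectors $|\psi\rangle,|\phi\rangle\in\mathbb{H}$ satisfying $$|\langle X|(|\psi\rangle|\psi\rangle|\phi\rangle)|^2=c'_1,\qquad |\langle X|(|\phi\rangle|\phi\rangle|\psi\rangle)|^2=c'_2,$$ one has $\mathcal{F}'(\rho_\mu\otimes\rho_\psi^{\otimes2}\otimes\rho_\phi^{\otimes2})=\rho_{\varphi'}$ with $$|\varphi'\rangle\propto\alpha e^{i\theta_3}|\psi\rangle+\beta e^{i\theta_4}|\phi\rangle,\quad e^{i\theta_3}=\frac{\langle X|(|\phi\rangle|\phi\rangle|\psi\rangle)}{|\langle X|(|\phi\rangle|\phi\rangle|\psi\rangle)|},\quad e^{i\theta_4}=\frac{\langle X|(|\psi\rangle|\psi\rangle|\phi\rangle)}{|\langle X|(|\psi\rangle|\psi\rangle|\phi\rangle)|}$$ (the superposition assumed nonzero).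
   Context: For a unit vector $|\psi\rangle$, $\rho_\psi=|\psi\rangle\langle\psi|$; $|\varphi\rangle\propto|\chi\rangle$ means $|\varphi\rangle$ is the normalization of $|\chi\rangle$ up to a global phase. A probabilistic quantum transformation from $\mathbb{H}_1$ to $\mathbb{H}_2$ is a completely positive, trace-non-increasing linear map from operators on $\mathbb{H}_1$ to operators on $\mathbb{H}_2$; $\mathcal{F}(\rho)=\sigma$ for pure states means $\mathcal{F}(\rho)=p\sigma$ for some $p>0$. *)

(* Defs.v *)
From HB Require Import structures.
From mathcomp Require Import all_boot all_order all_algebra.
Set Implicit Arguments. Unset Strict Implicit. Unset Printing Implicit Defensive.
Import Order.TTheory GRing.Theory Num.Theory.
Local Open Scope ring_scope.

Section QDefs.
Variable C : numClosedFieldType.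

Definition adjmx m n (A : 'M[C]_(m, n)) : 'M[C]_(n, m) := (map_mx Num.conj A)^T.

Definition braket n (u v : 'cV[C]_n) : C := (adjmx u *m v) 0 0.

Definition unit_vec n (v : 'cV[C]_n) : Prop := braket v v = 1.

Definition rho n (v : 'cV[C]_n) : 'M[C]_n := v *m adjmx v.

Definition normalize n (v : 'cV[C]_n) : 'cV[C]_n := (sqrtC (braket v v))^-1 *: v.

Definition phase (z : C) : C := z / `|z|.

Definition psd n (A : 'M[C]_n) : Prop := forall v : 'cV[C]_n, 0 <= braket v (A *m v).

End QDefs.

(* index bookkeeping for the Kronecker (tensor) product, row-major order:
   the pair (i, j) in 'I_m * 'I_n corresponds to i * n + j in 'I_(m * n) *)
Lemma tidx1_proof m n (k : 'I_(m * n)) : (k %/ n < m)%N.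
Proof.
case: n k => [|n] k; first by case: k => k; rewrite muln0.
by rewrite ltn_divLR.
Qed.

Lemma tidx2_proof m n (k : 'I_(m * n)) : (k %% n < n)%N.
Proof.
case: n k => [|n] k; first by case: k => k; rewrite muln0.
by rewrite ltn_mod.
Qed.

Lemma tpair_proof m n (i : 'I_m) (j : 'I_n) : (i * n + j < m * n)%N.
Proof.
case: i => i Hi; case: j => j Hj /=.
apply: (@leq_trans (i * n + n)); first by rewrite ltn_add2l.
by rewrite -mulSnr leq_mul2r Hi orbT.
Qed.

Definition tidx1 m n (k : 'I_(m * n)) : 'I_m := Ordinal (tidx1_proof k).
Definition tidx2 m n (k : 'I_(m * n)) : 'I_n := Ordinal (tidx2_proof k).
Definition tpair m n (i : 'I_m) (j : 'I_n) : 'I_(m * n) := Ordinal (tpair_proof i j).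

Section QOps.
Variable C : numClosedFieldType.

Definition kron m1 n1 m2 n2 (A : 'M[C]_(m1, n1)) (B : 'M[C]_(m2, n2))
  : 'M[C]_(m1 * m2, n1 * n2) :=
  \matrix_(k, l) (A (tidx1 k) (tidx1 l) * B (tidx2 k) (tidx2 l)).

(* (id_k (x) F) applied to an operator on C^k (x) C^N *)
Definition ampl k N M (F : 'M[C]_N -> 'M[C]_M) (X : 'M[C]_(k * N)) : 'M[C]_(k * M) :=
  \matrix_(p, q)
    (F (\matrix_(a, b) X (tpair (tidx1 p) a) (tpair (tidx1 q) b))) (tidx2 p) (tidx2 q).

Definition completely_positive N M (F : 'M[C]_N -> 'M[C]_M) : Prop :=
  forall (k : nat) (X : 'M[C]_(k * N)), psd X -> psd (ampl F X).

Definition trace_nonincreasing N M (F : 'M[C]_N -> 'M[C]_M) : Prop :=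
  forall X : 'M[C]_N, psd X -> \tr (F X) <= \tr X.

Definition prob_qtrans N M (F : 'M[C]_N -> 'M[C]_M) : Prop :=
  linear F /\ completely_positive F /\ trace_nonincreasing F.

Definition qubit (alpha beta : C) : 'cV[C]_2 :=
  \col_(i < 2) (if val i == 0%N then alpha else beta).

End QOps.

(* Main.v *)
Require Import Defs.
From HB Require Import structures.
From mathcomp Require Import all_boot all_order all_algebra.
From mathcomp Require Import ring lra.
Set Implicit Arguments. Unset Strict Implicit. Unset Printing Implicit Defensive.
Import Order.TTheory GRing.Theory Num.Theory.
Local Open Scope ring_scope.


Lemma tidx1_pair m n (i : 'I_m) (j : 'I_n) : tidx1 (tpair i j) = i.
Proof.
apply: val_inj => /=; case: i j => i Hi [j Hj] /=.
by rewrite divnMDl ?divn_small ?addn0 //; case: n Hj.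
Qed.

Lemma tidx2_pair m n (i : 'I_m) (j : 'I_n) : tidx2 (tpair i j) = j.
Proof.
apply: val_inj => /=; case: i j => i Hi [j Hj] /=.
by rewrite modnMDl modn_small.
Qed.

Lemma tpair_idx m n (k : 'I_(m * n)) : tpair (tidx1 k) (tidx2 k) = k.
Proof. by apply: val_inj => /=; rewrite -divn_eq. Qed.

Lemma sum_tpair (R : nmodType) m n (F : 'I_(m * n) -> R) :
  \sum_(k < m * n) F k = \sum_(i < m) \sum_(j < n) F (tpair i j).
Proof.
rewrite pair_big /=.
rewrite (reindex (fun p : 'I_m * 'I_n => tpair p.1 p.2)) //=.
exists (fun k => (tidx1 k, tidx2 k)) => [[i j] _|k _] /=.
  by rewrite tidx1_pair tidx2_pair.
by rewrite tpair_idx.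
Qed.

Lemma sum_pick (R : pzSemiRingType) m (j : 'I_m) (f : 'I_m -> R) :
  \sum_(i < m) ((i == j)%:R * f i) = f j.
Proof.
rewrite (bigD1 j) //= eqxx mul1r big1 ?addr0 // => i /negPf ->.
by rewrite mul0r.
Qed.

Lemma sum_pick' (R : pzSemiRingType) m (j : 'I_m) (f : 'I_m -> R) :
  \sum_(i < m) ((j == i)%:R * f i) = f j.
Proof. by rewrite -(sum_pick j); apply: eq_bigr => i _; rewrite eq_sym. Qed.



Section Gen.
Variable C : numClosedFieldType.

Lemma adjmxM m n p (A : 'M[C]_(m, n)) (B : 'M[C]_(n, p)) :
  adjmx (A *m B) = adjmx B *m adjmx A.
Proof. by rewrite /adjmx map_mxM trmx_mul. Qed.

Lemma adjmxK m n (A : 'M[C]_(m, n)) : adjmx (adjmx A) = A.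
Proof.
by apply/matrixP => i j; rewrite /adjmx !mxE conjCK.
Qed.

Lemma adjmxZ m n (a : C) (A : 'M[C]_(m, n)) : adjmx (a *: A) = a^* *: adjmx A.
Proof. by apply/matrixP => i j; rewrite /adjmx !mxE rmorphM. Qed.

Lemma psd_sandwich m n (A : 'M[C]_(m, n)) (X : 'M[C]_n) :
  psd X -> psd (A *m X *m adjmx A).
Proof.
move=> pX v; have := pX (adjmx A *m v).
by rewrite /braket adjmxM adjmxK !mulmxA.
Qed.

Lemma psdZ n (t : C) (X : 'M[C]_n) : 0 <= t -> psd X -> psd (t *: X).
Proof.
move=> t0 pX v; rewrite /braket -scalemxAl -scalemxAr mxE.
by apply: mulr_ge0 => //; apply: pX.
Qed.

Definition sandw m n (K : 'M[C]_(m, n)) (t : C) (X : 'M[C]_n) : 'M[C]_m :=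
  t *: (K *m X *m adjmx K).

Lemma sandw_linear m n (K : 'M[C]_(m, n)) t : linear (sandw K t).
Proof.
move=> a u v; rewrite /sandw mulmxDr mulmxDl scalerDr.
by rewrite -scalemxAr -scalemxAl !scalerA mulrC.
Qed.

Definition Kk k m n (K : 'M[C]_(m, n)) : 'M[C]_(k * m, k * n) :=
  \matrix_(p, r) ((tidx1 p == tidx1 r)%:R * K (tidx2 p) (tidx2 r)).

Lemma ampl_sandw k m n (K : 'M[C]_(m, n)) t (X : 'M[C]_(k * n)) :
  ampl (sandw K t) X = sandw (Kk k K) t X.
Proof.
apply/matrixP => p q; rewrite /sandw !mxE.
congr (_ * _); symmetry.
rewrite sum_tpair (bigD1 (tidx1 q)) //= [X in _ + X]big1 ?addr0; last first.
  move=> l /negPf Hl; apply: big1 => b _.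
  by rewrite /adjmx !mxE tidx1_pair eq_sym Hl !mul0r rmorph0 mulr0.
apply: eq_bigr => b _.
rewrite /adjmx !mxE !tidx1_pair !tidx2_pair eqxx mul1r.
congr (_ * _).
rewrite sum_tpair (bigD1 (tidx1 p)) //= [X in _ + X]big1 ?addr0; last first.
  move=> l /negPf Hl; apply: big1 => a _.
  by rewrite !mxE tidx1_pair eq_sym Hl !mul0r.
apply: eq_bigr => a _.
by rewrite !mxE !tidx1_pair !tidx2_pair eqxx mul1r.
Qed.

Lemma sandw_cp m n (K : 'M[C]_(m, n)) t : 0 <= t -> completely_positive (sandw K t).
Proof.
move=> t0 k X pX; rewrite ampl_sandw /sandw.
by apply: psdZ => //; apply: psd_sandwich.
Qed.

End Gen.



Section Psd.
Variable C : numClosedFieldType.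

Lemma adjmxD m n (A B : 'M[C]_(m, n)) : adjmx (A + B) = adjmx A + adjmx B.
Proof. by apply/matrixP => i j; rewrite /adjmx !mxE rmorphD. Qed.

Lemma adjmx_delta n (i : 'I_n) : adjmx (delta_mx i (0 : 'I_1)) = delta_mx 0 i :> 'M[C]_(1, n).
Proof.
by apply/matrixP => a b; rewrite /adjmx !mxE rmorph_nat andbC.
Qed.

Definition ev n (i : 'I_n) : 'cV[C]_n := delta_mx i 0.

Lemma braket_ev n (X : 'M[C]_n) i j : braket (ev i) (X *m ev j) = X i j.
Proof.
by rewrite /braket /ev adjmx_delta -colE -rowE !mxE.
Qed.

Lemma braket_quad n (X : 'M[C]_n) i j (z : C) :
  braket (ev i + z *: ev j) (X *m (ev i + z *: ev j)) =
  X i i + z * X i j + z^* * X j i + z^* * z * X j j.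
Proof.
rewrite /braket adjmxD adjmxZ mulmxDr mulmxDl !mulmxDr -!scalemxAr -!scalemxAl.
have hb u w : (adjmx (ev u) *m (X *m ev w)) 0 0 = X u w by apply: braket_ev.
have e (a1 a2 a3 a4 : 'M[C]_1) : (a1 + z *: a2 + (z^* *: a3 + z *: (z^* *: a4))) 0 0
   = a1 0 0 + z * a2 0 0 + (z^* * a3 0 0 + z * (z^* * a4 0 0)) by rewrite !mxE.
rewrite e !hb.
ring.
Qed.

Lemma psd_diag n (X : 'M[C]_n) i : psd X -> 0 <= X i i.
Proof. by move=> pX; rewrite -braket_ev; apply: pX. Qed.

Lemma psd_off n (X : 'M[C]_n) i j : psd X -> `|X i j| <= X i i + X j j.
Proof.
move=> pX.
set s := X i i + X j j; set x := X i j; set y := X j i.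
have q z : z^* * z = 1 -> 0 <= s + z * x + z^* * y.
  move=> hz; have := pX (ev i + z *: ev j).
  rewrite braket_quad hz mul1r.
  suff -> : s + z * x + z^* * y = X i i + z * X i j + z^* * X j i + X j j by [].
  rewrite /s /x /y; ring.
have qq z w : z^* * z = 1 -> s + z * x + z^* * y = w -> 0 <= w.
  by move=> hz <-; apply: q.
have ci : 'i^* = - 'i :> C by apply: conjCi.
have cni : (- 'i)^* = 'i :> C.
  have -> : (- 'i)^* = - ('i^*) :> C by apply: raddfN.
  by rewrite ci opprK.
have cn1 : (- 1)^* = - 1 :> C.
  have -> : (- 1)^* = - (1^*) :> C by apply: raddfN.
  by rewrite rmorph1.
have hi : 'i^* * 'i = 1 :> C by rewrite ci mulNr -expr2 sqrCi opprK.
have ii : 'i * 'i = -1 :> C by rewrite -expr2 sqrCi.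
have h1 : 0 <= s + (x + y).
  by apply: (qq 1); rewrite ?rmorph1 ?mulr1 // !mul1r addrA.
have h2 : 0 <= s - (x + y).
  by apply: (qq (-1)); rewrite cn1 ?mulrNN ?mulr1 //; ring.
have h3 : 0 <= s + ('i * x - 'i * y).
  by apply: (qq 'i); rewrite ?hi // ci; ring.
have h4 : 0 <= s - ('i * x - 'i * y).
  apply: (qq (-'i)); rewrite cni; last ring.
  by rewrite mulrN ii opprK.
have s0 : 0 <= s.
  have : 0 <= (s + (x + y)) + (s - (x + y)) by apply: addr_ge0.
  have -> : (s + (x + y)) + (s - (x + y)) = s *+ 2 by rewrite mulr2n; ring.
  by rewrite pmulrn_lge0.
have sR : s \is Num.real by apply: ger0_real.
have normle (w : C) : 0 <= s + w -> 0 <= s - w -> `|w| <= s.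
  move=> a b; have wR : w \is Num.real.
    have -> : w = (s + w) - s by ring.
    by apply: realB => //; apply: ger0_real.
  rewrite real_ler_norml //; apply/andP; split.
    by rewrite -subr_ge0 opprK addrC.
  by rewrite -subr_ge0.
have hp : `|x + y| <= s by apply: normle.
have hr : `|'i * x - 'i * y| <= s by apply: normle.
have ex : x = ((x + y) - 'i * ('i * x - 'i * y)) / 2.
  apply: (canRL (mulfK _)); first by rewrite pnatr_eq0.
  have e2 : 'i * ('i * x - 'i * y) = y - x by rewrite mulrBr !mulrA ii; ring.
  by rewrite e2; ring.
rewrite ex normrM normfV (ger0_norm (ler0n C 2)).
rewrite ler_pdivrMr ?ltr0n //.
apply: (le_trans (ler_normB _ _)); rewrite normrM normCi mul1r.
by rewrite mulr_natr mulr2n lerD.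
Qed.

End Psd.



Section Tr.
Variable C : numClosedFieldType.

Lemma psd_tr_ge0 n (X : 'M[C]_n) : psd X -> 0 <= \tr X.
Proof. by move=> pX; apply: sumr_ge0 => i _; apply: psd_diag. Qed.

Lemma psd_diag_le n (X : 'M[C]_n) i : psd X -> X i i <= \tr X.
Proof.
move=> pX; rewrite /mxtrace (bigD1 i) //= lerDl.
by apply: sumr_ge0 => j _; apply: psd_diag.
Qed.

Lemma psd_entry_le n (X : 'M[C]_n) i j : psd X -> `|X i j| <= \tr X *+ 2.
Proof.
move=> pX; apply: (le_trans (psd_off i j pX)).
by rewrite mulr2n lerD // psd_diag_le.
Qed.

Definition Mbound m n (K : 'M[C]_(m, n)) : C :=
  \sum_i \sum_j `|(adjmx K *m K) i j|.

Definition tK m n (K : 'M[C]_(m, n)) : C := (1 + Mbound K *+ 2)^-1.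

Lemma Mbound_ge0 m n (K : 'M[C]_(m, n)) : 0 <= Mbound K.
Proof. by apply: sumr_ge0 => i _; apply: sumr_ge0 => j _. Qed.

Lemma tK_gt0 m n (K : 'M[C]_(m, n)) : 0 < tK K.
Proof.
rewrite /tK invr_gt0; apply: (lt_le_trans ltr01).
by rewrite lerDl mulrn_wge0 // Mbound_ge0.
Qed.

Lemma sandw_tni m n (K : 'M[C]_(m, n)) : trace_nonincreasing (sandw K (tK K)).
Proof.
move=> X pX.
have t0 := tK_gt0 K.
have pF : psd (sandw K (tK K) X).
  by apply: psdZ; [apply: ltW | apply: psd_sandwich].
have trF0 := psd_tr_ge0 pF.
rewrite -(ger0_norm trF0) /sandw mxtraceZ normrM (gtr0_norm t0).
rewrite mxtrace_mulC mulmxA.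
set A := adjmx K *m K.
have trX0 := psd_tr_ge0 pX.
have H : `|\tr (A *m X)| <= Mbound K * (\tr X *+ 2).
  rewrite /mxtrace /Mbound mulr_suml.
  apply: (le_trans (ler_norm_sum _ _ _)); apply: ler_sum => i _.
  rewrite mxE mulr_suml.
  apply: (le_trans (ler_norm_sum _ _ _)); apply: ler_sum => j _.
  rewrite normrM; apply: ler_wpM2l => //.
  exact: psd_entry_le.
apply: (le_trans (ler_wpM2l (ltW t0) H)).
rewrite /tK mulrC ler_pdivrMr ?invr_gt0; last first.
  by apply: (lt_le_trans ltr01); rewrite lerDl mulrn_wge0 // Mbound_ge0.
rewrite -subr_ge0.
have -> : \tr X * (1 + Mbound K *+ 2) - Mbound K * (\tr X *+ 2) = \tr X.
  by rewrite !mulr2n; ring.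
done.
Qed.
End Tr.



Section Main.
Variable C : numClosedFieldType.

Lemma kronv m n (u : 'cV[C]_m) (v : 'cV[C]_n) i (j : 'I_(1 * 1)) :
  kron u v i j = u (tidx1 i) 0 * v (tidx2 i) 0.
Proof. by rewrite mxE [tidx1 j]ord1 [tidx2 j]ord1. Qed.

Lemma kron_rho m n (u : 'cV[C]_m) (v : 'cV[C]_n) :
  kron (rho u) (rho v) = rho (kron u v).
Proof.
apply/matrixP => i j; rewrite /rho !mxE !big_ord1 /adjmx !mxE.
have h1 : tidx1 (ord0 : 'I_(1*1)) = ord0 := ord1 _.
have h2 : tidx2 (ord0 : 'I_(1*1)) = ord0 := ord1 _.
by rewrite h1 h2 rmorphM; ring.
Qed.

Lemma rhoZ n (a : C) (v : 'cV[C]_n) : rho (a *: v) = (a * a^*) *: rho v.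
Proof.
by rewrite /rho adjmxZ -scalemxAl -scalemxAr scalerA.
Qed.

Lemma sandw_rho m n (K : 'M[C]_(m, n)) t (w : 'cV[C]_n) :
  sandw K t (rho w) = t *: rho (K *m w).
Proof. by rewrite /sandw /rho adjmxM !mulmxA. Qed.


Variable d : nat.

Definition tp (q : 'I_2) (a b c e : 'I_d) : 'I_(2 * d * d * d * d) :=
  tpair (tpair (tpair (tpair q a) b) c) e.

Lemma sum5 (F : 'I_(2 * d * d * d * d) -> C) :
  \sum_r F r = \sum_q \sum_a \sum_b \sum_c \sum_e F (tp q a b c e).
Proof. by rewrite !sum_tpair. Qed.

Lemma sum5a (F : 'I_(2 * d * d * d * d) -> C) :
  \sum_r F r = \sum_q \sum_b \sum_c \sum_e \sum_a F (tp q a b c e).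
Proof.
rewrite sum5; apply: eq_bigr => q _; rewrite exchange_big.
apply: eq_bigr => b _; rewrite exchange_big.
apply: eq_bigr => c _; rewrite exchange_big.
by apply: eq_bigr => e _.
Qed.

Lemma sum5b (F : 'I_(2 * d * d * d * d) -> C) :
  \sum_r F r = \sum_q \sum_e \sum_a \sum_b \sum_c F (tp q a b c e).
Proof.
rewrite sum5.
transitivity (\sum_q \sum_a \sum_b \sum_e \sum_c F (tp q a b c e)).
  apply: eq_bigr => q _; apply: eq_bigr => a _; apply: eq_bigr => b _.
  exact: exchange_big.
transitivity (\sum_q \sum_a \sum_e \sum_b \sum_c F (tp q a b c e)).
  apply: eq_bigr => q _; apply: eq_bigr => a _; exact: exchange_big.
apply: eq_bigr => q _; exact: exchange_big.
Qed.

Lemma fact5 (A : 'I_2 -> C) (B : 'I_d -> C) (D : 'I_d -> 'I_d -> 'I_d -> C) :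
  \sum_q \sum_b \sum_c \sum_e \sum_a (A q * (B b * D c e a)) =
  (\sum_q A q) * ((\sum_b B b) * \sum_c \sum_e \sum_a D c e a).
Proof.
rewrite big_distrl /=; apply: eq_bigr => q _.
rewrite big_distrl big_distrr /=; apply: eq_bigr => b _.
rewrite big_distrr /= big_distrr /=; apply: eq_bigr => c _.
rewrite big_distrr /= big_distrr /=; apply: eq_bigr => e _.
rewrite big_distrr /= big_distrr /=; apply: eq_bigr => a _.
done.
Qed.


Variable X : 'cV[C]_(d * d * d).
Variables s1 s2 : C.

Definition K0 : 'M[C]_(d, 2 * d * d * d * d) :=
  \matrix_(o, r) ((val (tidx1 (tidx1 (tidx1 (tidx1 r)))) == 0%N)%:R * s1 *
     (tidx2 (tidx1 (tidx1 r)) == o)%:R *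
     (X (tpair (tpair (tidx2 (tidx1 r)) (tidx2 r)) (tidx2 (tidx1 (tidx1 (tidx1 r))))) 0)^*).

Definition K1 : 'M[C]_(d, 2 * d * d * d * d) :=
  \matrix_(o, r) ((val (tidx1 (tidx1 (tidx1 (tidx1 r)))) == 1%N)%:R * s2 *
     (tidx2 r == o)%:R *
     (X (tpair (tpair (tidx2 (tidx1 (tidx1 (tidx1 r)))) (tidx2 (tidx1 (tidx1 r))))
          (tidx2 (tidx1 r))) 0)^*).

Definition w5 (mu : 'cV[C]_2) (psi phi : 'cV[C]_d) :=
  kron (kron (kron (kron mu psi) psi) phi) phi.

Lemma w5E mu psi phi q a b c e (j : 'I_(1 * 1 * 1 * 1 * 1)) :
  w5 mu psi phi (tp q a b c e) j = mu q 0 * psi a 0 * psi b 0 * phi c 0 * phi e 0.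
Proof. by rewrite /w5 /tp !kronv !tidx1_pair !tidx2_pair. Qed.

Lemma braket3 (u v x : 'cV[C]_d) :
  braket X (kron (kron u v) x) =
  \sum_c \sum_e \sum_a ((X (tpair (tpair c e) a) 0)^* * (u c 0 * v e 0 * x a 0)).
Proof.
rewrite /braket mxE !sum_tpair; apply: eq_bigr => c _; apply: eq_bigr => e _.
apply: eq_bigr => a _.
by rewrite !kronv /adjmx !mxE !tidx1_pair !tidx2_pair.
Qed.

Lemma K0w mu psi phi o :
  (K0 *m w5 mu psi phi) o 0 = mu 0 0 * (psi o 0 * (s1 * braket X (kron (kron phi phi) psi))).
Proof.
rewrite mxE sum5a.
transitivity (\sum_q \sum_b \sum_c \sum_e \sum_a
  (((val q == 0%N)%:R * mu q 0) * (((b == o)%:R * psi b 0) *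
    (s1 * ((X (tpair (tpair c e) a) 0)^* * (phi c 0 * phi e 0 * psi a 0)))))).
  apply: eq_bigr => q _; apply: eq_bigr => b _; apply: eq_bigr => c _.
  apply: eq_bigr => e _; apply: eq_bigr => a _.
  rewrite w5E mxE /tp !tidx1_pair !tidx2_pair; ring.
rewrite fact5 big_ord_recl big_ord1 /= mul1r mul0r addr0.
rewrite (sum_pick o (fun b => psi b 0)) braket3 [in RHS]big_distrr /=.
congr (_ * (_ * _)); apply: eq_bigr => c _; rewrite [in RHS]big_distrr /=.
by apply: eq_bigr => e _; rewrite [in RHS]big_distrr.
Qed.


Lemma K1w mu psi phi o :
  (K1 *m w5 mu psi phi) o 0 =
  mu (lift ord0 (ord0 : 'I_1)) 0 * (phi o 0 * (s2 * braket X (kron (kron psi psi) phi))).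
Proof.
rewrite mxE sum5b.
transitivity (\sum_q \sum_e \sum_a \sum_b \sum_c
  (((val q == 1%N)%:R * mu q 0) * (((e == o)%:R * phi e 0) *
    (s2 * ((X (tpair (tpair a b) c) 0)^* * (psi a 0 * psi b 0 * phi c 0)))))).
  apply: eq_bigr => q _; apply: eq_bigr => e _; apply: eq_bigr => a _.
  apply: eq_bigr => b _; apply: eq_bigr => c _.
  rewrite w5E mxE /tp !tidx1_pair !tidx2_pair; ring.
rewrite fact5 big_ord_recl big_ord1 /= mul1r mul0r add0r.
rewrite (sum_pick o (fun b => phi b 0)) braket3 [in RHS]big_distrr /=.
congr (_ * (_ * _)); apply: eq_bigr => c _; rewrite [in RHS]big_distrr /=.
by apply: eq_bigr => e _; rewrite [in RHS]big_distrr.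
Qed.

Lemma Kw alpha beta psi phi :
  (K0 + K1) *m w5 (qubit alpha beta) psi phi =
  (alpha * s1 * braket X (kron (kron phi phi) psi)) *: psi +
  (beta * s2 * braket X (kron (kron psi psi) phi)) *: phi.
Proof.
apply/matrixP => o j; rewrite [j]ord1 mulmxDl mxE K0w K1w !mxE /=.
ring.
Qed.

End Main.


Lemma braket_gt0 (C : numClosedFieldType) n (v : 'cV[C]_n) : v != 0 -> 0 < braket v v.
Proof.
move=> nz.
have E : braket v v = \sum_i `|v i 0| ^+ 2.
  by rewrite /braket mxE; apply: eq_bigr => i _; rewrite /adjmx !mxE normCKC.
have ge : 0 <= braket v v by rewrite E; apply: sumr_ge0 => i _; apply: exprn_ge0.
rewrite lt_def ge andbT; apply/eqP => b0.
move/negP: nz; apply; apply/eqP/matrixP => i j; rewrite [j]ord1 mxE.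
have h : `|v i 0| ^+ 2 = 0.
  apply: (@psumr_eq0P _ _ xpredT (fun i => `|v i 0| ^+ 2)) => //.
    by move=> k _; apply: exprn_ge0.
  by rewrite -E.
by apply/eqP; move/eqP: h; rewrite expf_eq0 /= normr_eq0.
Qed.

Lemma rho_normalize (C : numClosedFieldType) n (v : 'cV[C]_n) :
  rho (normalize v) = (braket v v)^-1 *: rho v.
Proof.
rewrite /normalize rhoZ; congr (_ *: _).
have b0 : 0 <= braket v v.
  rewrite /braket mxE; apply: sumr_ge0 => i _; rewrite /adjmx !mxE -normCKC.
  exact: exprn_ge0.
rewrite geC0_conj ?invr_ge0 ?sqrtC_ge0 // -expr2 exprVn sqrtCK //.
Qed.

Theorem theorem8 (C : numClosedFieldType) (d : nat) (hd : (2 <= d)%N)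
  (X : 'cV[C]_(d * d * d)) (hX : unit_vec X) (c1 c2 : C)
  (hc1 : 0 < c1) (hc2 : 0 < c2) :
  exists F : 'M[C]_(2 * d * d * d * d) -> 'M[C]_d,
    prob_qtrans F /\
    forall alpha beta : C,
      alpha != 0 -> beta != 0 -> `|alpha| ^+ 2 + `|beta| ^+ 2 = 1 ->
      forall psi phi : 'cV[C]_d,
        unit_vec psi -> unit_vec phi ->
        `|braket X (kron (kron psi psi) phi)| ^+ 2 = c1 ->
        `|braket X (kron (kron phi phi) psi)| ^+ 2 = c2 ->
        let chi := (alpha * phase (braket X (kron (kron phi phi) psi))) *: psi
                 + (beta * phase (braket X (kron (kron psi psi) phi))) *: phi in
        chi != 0 ->
        exists p : C, 0 < p /\
          F (kron (kron (kron (kron (rho (qubit alpha beta)) (rho psi)) (rho psi))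
                        (rho phi)) (rho phi))
          = p *: rho (normalize chi).
Proof.
set s1 := sqrtC c1; set s2 := sqrtC c2.
set K := K0 X s1 + K1 X s2.
exists (sandw K (tK K)); split.
  split; first exact: sandw_linear.
  split; first by apply: sandw_cp; apply: ltW; apply: tK_gt0.
  exact: sandw_tni.
move=> alpha beta a0 b0 ab psi phi upsi uphi h1 h2 chi chi0.
rewrite !kron_rho sandw_rho.
have -> : kron (kron (kron (kron (qubit alpha beta) psi) psi) phi) phi
  = w5 (qubit alpha beta) psi phi by [].
rewrite /K Kw.
set z1 := braket X (kron (kron psi psi) phi).
set z2 := braket X (kron (kron phi phi) psi).
have hz (z c : C) : 0 < c -> `|z| ^+ 2 = c -> z = sqrtC c * phase z /\ `|z| != 0.
  move=> c0 hzc; have nz : `|z| != 0.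
    by apply: contraTneq c0 => e; rewrite -hzc e expr0n /= ltxx.
  split => //; rewrite -hzc sqrCK ?normr_ge0 // /phase mulrC divfK //.
have [e1 n1] := hz z1 c1 hc1 h1.
have [e2 n2] := hz z2 c2 hc2 h2.
have -> : (alpha * s1 * z2) *: psi + (beta * s2 * z1) *: phi = (s1 * s2) *: chi.
  rewrite /chi scalerDr !scalerA; congr (_ *: _ + _ *: _).
    by rewrite {1}e2 -/s2; ring.
  by rewrite {1}e1 -/s1; ring.
rewrite rhoZ rho_normalize scalerA.
have bp := braket_gt0 chi0.
have s1p : 0 < s1 by rewrite sqrtC_gt0.
have s2p : 0 < s2 by rewrite sqrtC_gt0.
exists (tK K * (s1 * s2 * (s1 * s2)^*) * braket chi chi); split.
  apply: mulr_gt0 => //; apply: mulr_gt0; first exact: tK_gt0.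
  rewrite geC0_conj; last by apply: mulr_ge0; apply: ltW.
  by apply: mulr_gt0; apply: mulr_gt0.
rewrite scalerA; congr (_ *: _); rewrite mulfK //.
by apply: lt0r_neq0.
Qed.
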